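(* Let $n\ge 2$ be an integer and let $\mathcal{P}(\lambda)=(8n^3-12n^2+2n+1)\lambda^4+(-64n^6+192n^5-192n^4+64n^3+4n^2+2n-4)\lambda^3+(-96n^5+224n^4-168n^3+52n^2-18n+6)\lambda^2+(32n^5-112n^4+128n^3-68n^2+22n-4)\lambda+16n^4-32n^3+24n^2-8n+1.$ Then $\mathcal{P}(\lambda)$ has a unique root larger than $(2n-1)^2$, and all other roots of $\mathcal{P}$ are less than $1$. *)

(* Defs.v *)
From mathcomp Require Import all_boot all_order all_algebra.
Set Implicit Arguments. Unset Strict Implicit. Unset Printing Implicit Defensive.
Import Order.TTheory GRing.Theory Num.Theory.
Local Open Scope ring_scope.

Definition Ppoly (R : comRingType) (n : nat) : {poly R} :=
  let m : R := n%:R in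
  (8 * m ^+ 3 - 12 * m ^+ 2 + 2 * m + 1)%:P * 'X^4
  + (- 64 * m ^+ 6 + 192 * m ^+ 5 - 192 * m ^+ 4 + 64 * m ^+ 3
     + 4 * m ^+ 2 + 2 * m - 4)%:P * 'X^3
  + (- 96 * m ^+ 5 + 224 * m ^+ 4 - 168 * m ^+ 3 + 52 * m ^+ 2
     - 18 * m + 6)%:P * 'X^2
  + (32 * m ^+ 5 - 112 * m ^+ 4 + 128 * m ^+ 3 - 68 * m ^+ 2
     + 22 * m - 4)%:P * 'X
  + (16 * m ^+ 4 - 32 * m ^+ 3 + 24 * m ^+ 2 - 8 * m + 1)%:P.

(* Main.v *)
Require Import Defs.
From mathcomp Require Import all_boot all_order all_algebra.
From mathcomp Require Import ring.
From mathcomp Require Import polyrcf.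
Import Order.TTheory GRing.Theory Num.Theory.
Local Open Scope ring_scope.

Ltac nonneg hk := repeat match goal with
  | |- is_true (0 <= _ + _) => apply: addr_ge0
  | |- is_true (0 <= _ * _) => apply: mulr_ge0
  | |- is_true (0 <= _ ^+ _) => apply: exprn_ge0
  | |- is_true (0 <= _) => first [exact: ler0n | exact: ler01 | exact hk]
  end.
Ltac pos hk := apply: ltr_wpDr; [nonneg hk | exact: ltr01].

Section S.
Variable R : rcfType.
Variable n : nat.
Let m : R := n%:R.
Lemma Peval (x : R) : (Ppoly R n).[x] =
  (8 * m ^+ 3 - 12 * m ^+ 2 + 2 * m + 1) * x ^+ 4
  + (- 64 * m ^+ 6 + 192 * m ^+ 5 - 192 * m ^+ 4 + 64 * m ^+ 3
     + 4 * m ^+ 2 + 2 * m - 4) * x ^+ 3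
  + (- 96 * m ^+ 5 + 224 * m ^+ 4 - 168 * m ^+ 3 + 52 * m ^+ 2
     - 18 * m + 6) * x ^+ 2
  + (32 * m ^+ 5 - 112 * m ^+ 4 + 128 * m ^+ 3 - 68 * m ^+ 2
     + 22 * m - 4) * x
  + (16 * m ^+ 4 - 32 * m ^+ 3 + 24 * m ^+ 2 - 8 * m + 1).
Proof. rewrite /Ppoly !hornerE. by []. Qed.

Lemma Psize : (size (Ppoly R n) <= 5)%N.
Proof.
rewrite /Ppoly.
have hm : forall (c : R) (i : nat), (size (c%:P * 'X^i)%R <= i.+1)%N.
  move=> c i; apply: leq_trans (size_polyMleq _ _) _.
  rewrite size_polyXn addnS /=.
  by have := size_polyC_leq1 c; rewrite leqNgt; case: (size _) => [|[]].
have h1 : forall (c : R), (size (c%:P * 'X)%R <= 2)%N.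
  by move=> c; rewrite -['X]expr1; apply: hm.
repeat (apply: leq_trans (size_polyD _ _) _; rewrite geq_max; apply/andP; split).
all: try (apply: leq_trans (hm _ _) _; done).
all: try (apply: leq_trans (h1 _) _; done).
by apply: leq_trans (size_polyC_leq1 _) _.
Qed.

Variable k : R.
Hypothesis hm : m = k + 2.
Lemma Pm2 : (Ppoly R n).[-2] = 1 + ((1 * 1000 + 720) + (9 * 1000 + 428) * k ^+ 1 + (20 * 1000 + 368) * k ^+ 2 + (22 * 1000 + 592) * k ^+ 3 + (13 * 1000 + 552) * k ^+ 4 + (4 * 1000 + 160) * k ^+ 5 + 512 * k ^+ 6).
Proof. rewrite Peval hm. ring. Qed.
Lemma P0 : (Ppoly R n).[0] = 1 + (80 + 216 * k ^+ 1 + 216 * k ^+ 2 + 96 * k ^+ 3 + 16 * k ^+ 4).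
Proof. rewrite Peval hm. ring. Qed.
Lemma P1 : (Ppoly R n).[1] = - (1 + ((1 * 1000 + 23) + (4 * 1000 + 96) * k ^+ 1 + (6 * 1000 + 656) * k ^+ 2 + (5 * 1000 + 632) * k ^+ 3 + (2 * 1000 + 624) * k ^+ 4 + 640 * k ^+ 5 + 64 * k ^+ 6)).
Proof. rewrite Peval hm. ring. Qed.
Lemma PN : (Ppoly R n).[(2 * m - 1) ^+ 2] = - (1 + ((276 * 1000 + 479) + ((2 * 1000 + 377) * 1000 + 728) * k ^+ 1 + ((9 * 1000 + 354) * 1000 + 240) * k ^+ 2 + ((22 * 1000 + 255) * 1000 + 616) * k ^+ 3 + ((35 * 1000 + 652) * 1000 + 480) * k ^+ 4 + ((40 * 1000 + 494) * 1000 + 464) * k ^+ 5 + ((33 * 1000 + 421) * 1000 + 184) * k ^+ 6 + ((20 * 1000 + 184) * 1000 + 192) * k ^+ 7 + ((8 * 1000 + 848) * 1000 + 128) * k ^+ 8 + ((2 * 1000 + 744) * 1000 + 320) * k ^+ 9 + (571 * 1000 + 392) * k ^+ 10 + (71 * 1000 + 680) * k ^+ 11 + (4 * 1000 + 96) * k ^+ 12)).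
Proof. rewrite Peval hm. ring. Qed.
Lemma PB : (Ppoly R n).[8 * m ^+ 3] = 1 + (((219 * 1000 + 620) * 1000 + 944) + (((1 * 1000 + 750) * 1000 + 829) * 1000 + 912) * k ^+ 1 + (((6 * 1000 + 425) * 1000 + 251) * 1000 + 480) * k ^+ 2 + (((14 * 1000 + 402) * 1000 + 822) * 1000 + 336) * k ^+ 3 + (((22 * 1000 + 50) * 1000 + 518) * 1000 + 400) * k ^+ 4 + (((24 * 1000 + 408) * 1000 + 121) * 1000 + 312) * k ^+ 5 + (((20 * 1000 + 156) * 1000 + 380) * 1000 + 544) * k ^+ 6 + (((12 * 1000 + 621) * 1000 + 428) * 1000 + 736) * k ^+ 7 + (((6 * 1000 + 24) * 1000 + 542) * 1000 + 720) * k ^+ 8 + (((2 * 1000 + 182) * 1000 + 266) * 1000 + 368) * k ^+ 9 + ((590 * 1000 + 699) * 1000 + 520) * k ^+ 10 + ((115 * 1000 + 896) * 1000 + 320) * k ^+ 11 + ((15 * 1000 + 585) * 1000 + 280) * k ^+ 12 + ((1 * 1000 + 286) * 1000 + 144) * k ^+ 13 + (49 * 1000 + 152) * k ^+ 14).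
Proof. rewrite Peval hm. ring. Qed.
Lemma Pinv : k + 2 != 0 -> (Ppoly R n).[- m^-1] * m ^+ 4 = - (1 + (498 + (3 * 1000 + 186) * k ^+ 1 + (7 * 1000 + 836) * k ^+ 2 + (10 * 1000 + 226) * k ^+ 3 + (7 * 1000 + 993) * k ^+ 4 + (3 * 1000 + 916) * k ^+ 5 + (1 * 1000 + 192) * k ^+ 6 + 208 * k ^+ 7 + 16 * k ^+ 8)).
Proof. move=> hk. rewrite Peval hm. field. exact hk. Qed.
End S.
Arguments Pm2 {R n k}.
Arguments P0 {R n k}.
Arguments P1 {R n k}.
Arguments PN {R n k}.
Arguments PB {R n k}.
Arguments Pinv {R n k}.

Lemma ivt_sign (R : rcfType) (p : {poly R}) a b : a <= b -> p.[a] * p.[b] < 0 ->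
  exists2 x, a < x < b & root p x.
Proof.
move=> ab hab; have [x hx rx] := poly_ivtoo ab hab.
by exists x => //; rewrite in_itv /= in hx.
Qed.

Theorem lemma2p1 (R : rcfType) (n : nat) (hn : (2 <= n)%N) :
  exists r : R,
    [/\ root (Ppoly R n) r,
        ((2 * n - 1) ^ 2)%:R < r,
        (forall x : R, root (Ppoly R n) x -> ((2 * n - 1) ^ 2)%:R < x -> x = r)
      & (forall x : R, root (Ppoly R n) x -> x != r -> x < 1)].
Proof.
have hm : (n%:R : R) = (n - 2)%:R + 2 by rewrite -natrD subnK.
set k : R := (n - 2)%:R in hm.
have hk : 0 <= k by exact: ler0n.
have hN : ((2 * n - 1) ^ 2)%:R = (2 * (n%:R : R) - 1) ^+ 2.
  by rewrite natrX natrB ?natrM // muln_gt0 /= (ltnW hn).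
rewrite hN.
set m : R := n%:R in hm *.
set P := Ppoly R n.
have mpos : 0 < m by rewrite hm; apply: ltr_wpDl hk _; rewrite ltr0n.
have h1 : 0 < P.[-2] by rewrite /P (Pm2 hm); pos hk.
have h2 : P.[- m^-1] < 0.
  have := Pinv hm; rewrite -hm (gt_eqF mpos) => /(_ isT) e.
  rewrite -(pmulr_llt0 _ (exprn_gt0 4 mpos)) /P e oppr_lt0; pos hk.
have h3 : 0 < P.[0] by rewrite /P (P0 hm); pos hk.
have h4 : P.[1] < 0 by rewrite /P (P1 hm) oppr_lt0; pos hk.
have h5 : P.[(2 * m - 1) ^+ 2] < 0 by rewrite /P (PN hm) oppr_lt0; pos hk.
have h6 : 0 < P.[8 * m ^+ 3] by rewrite /P (PB hm); pos hk.
have minv : 0 < m^-1 by rewrite invr_gt0.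
have minv1 : m^-1 <= 1.
  rewrite invf_le1 // hm -subr_ge0; have -> : k + 2 - 1 = k + 1 by ring.
  nonneg hk.
have [r1 /andP[a1 b1] hr1] : exists2 x, -2 < x < - m^-1 & root P x.
  apply: ivt_sign; last by rewrite pmulr_rlt0.
  rewrite lerN2; apply: le_trans minv1 _; rewrite -subr_ge0.
  have -> : (2:R) - 1 = 1 by ring.
  exact: ler01.
have [r2 /andP[a2 b2] hr2] : exists2 x, - m^-1 < x < 0 & root P x.
  apply: ivt_sign; last by rewrite nmulr_rlt0.
  by rewrite oppr_le0 ltW.
have [r3 /andP[a3 b3] hr3] : exists2 x, 0 < x < 1 & root P x.
  apply: ivt_sign; last by rewrite pmulr_rlt0.
  exact: ler01.
have hNB : (2 * m - 1) ^+ 2 <= 8 * m ^+ 3.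
  rewrite -subr_ge0.
  have -> : 8 * m ^+ 3 - (2 * m - 1) ^+ 2 = 55 + 84 * k + 44 * k ^+ 2 + 8 * k ^+ 3
    by rewrite hm; ring.
  nonneg hk.
have h1N : 1 < (2 * m - 1) ^+ 2.
  rewrite -subr_gt0.
  have -> : (2 * m - 1) ^+ 2 - 1 = 1 + (7 + 12 * k + 4 * k ^+ 2) by rewrite hm; ring.
  pos hk.
have [r4 /andP[a4 b4] hr4] : exists2 x, (2 * m - 1) ^+ 2 < x < 8 * m ^+ 3 & root P x.
  apply: ivt_sign => //; by rewrite nmulr_rlt0.
have P0 : P != 0 by apply: contraTneq h3 => ->; rewrite horner0 ltxx.
have allr : forall x, root P x -> [\/ x = r1, x = r2, x = r3 | x = r4].
  move=> x rx.
  case: (boolP (x \in [:: r1; r2; r3; r4])).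
    by rewrite !inE => /or4P [] /eqP ->; [constructor 1|constructor 2|constructor 3|constructor 4].
  move=> xn; exfalso.
  have := @max_poly_roots _ P [:: x; r1; r2; r3; r4] P0.
  rewrite /= rx hr1 hr2 hr3 hr4 xn /=.
  have u : uniq [:: r1; r2; r3; r4].
    apply: (@sorted_uniq _ <%R lt_trans ltxx).
    rewrite /= (lt_trans b1 a2) (lt_trans b2 a3) (lt_trans b3 (lt_trans h1N a4)) //.
  rewrite /= in u; rewrite u => /(_ isT isT).
  by rewrite ltnNge (Psize R n).
have r3N : r3 < (2 * m - 1) ^+ 2 := lt_trans b3 h1N.
exists r4; split => //.
- move=> x rx xN; case: (allr x rx) => // ?; subst x; exfalso.
  + by have := lt_trans (lt_trans b1 (lt_trans a2 (lt_trans b2 (lt_trans a3 r3N)))) xN; rewrite ltxx.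
  + by have := lt_trans (lt_trans b2 (lt_trans a3 r3N)) xN; rewrite ltxx.
  + by have := lt_trans r3N xN; rewrite ltxx.
- move=> x rx xr; case: (allr x rx) => [->|->|->|xe]; last by rewrite xe eqxx in xr.
  + by apply: lt_trans (lt_trans b1 a2) (lt_trans b2 (lt_trans a3 b3)).
  + by apply: lt_trans b2 (lt_trans a3 b3).
  + done.
Qed.
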